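(* Let $(L,\vee,\wedge,0,1)$ be a finite complemented lattice with $0\ne1$ such that the mapping $x\mapsto x^{++}$ from $L$ to $2^L$ is injective, and let $a\in L$ with $a^{++}\neq\{a\}$. Then there exists some $b\in a^{++}$ with $b^{++}=\{b\}$.
   Context: For $a\in L$, $a^+:=\{x\in L\mid a\vee x=1,\ a\wedge x=0\}$ (the set of all complements of $a$). For $A\subseteq L$, $A^+:=\{x\in L\mid a\vee x=1\text{ and }a\wedge x=0\text{ for all }a\in A\}$, and $a^{++}:=(a^+)^+$. *)

(* Defs.v *)
From HB Require Import structures.
From mathcomp Require Import all_boot all_order.
Set Implicit Arguments. Unset Strict Implicit. Unset Printing Implicit Defensive.
Import Order.TTheory.
Local Open Scope order_scope.

Definition compls {disp : Order.disp_t} {L : finTBLatticeType disp} (a : L) : {set L} :=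
  [set x : L | (a `|` x == \top) && (a `&` x == \bot)].

Definition complsS {disp : Order.disp_t} {L : finTBLatticeType disp} (A : {set L}) : {set L} :=
  [set x : L | [forall a in A, (a `|` x == \top) && (a `&` x == \bot)]].

Definition compls2 {disp : Order.disp_t} {L : finTBLatticeType disp} (a : L) : {set L} :=
  complsS (compls a).

Definition complemented {disp : Order.disp_t} (L : finTBLatticeType disp) : Prop :=
  forall a : L, exists x : L, (a `|` x = \top) /\ (a `&` x = \bot).

(* Main.v *)
Require Import Defs.
From mathcomp Require Import all_boot all_order.
Local Open Scope order_scope.

Lemma c2_self (disp : Order.disp_t) (L : finTBLatticeType disp) (a : L) :
  a \in compls2 a.
Proof.
by rewrite /compls2 /complsS inE; apply/forall_inP => x; rewrite /compls inE Order.JoinTheory.joinC Order.MeetTheory.meetC.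
Qed.

Lemma c2_sub (disp : Order.disp_t) (L : finTBLatticeType disp) (a b : L) :
  b \in compls2 a -> compls2 b \subset compls2 a.
Proof.
rewrite /compls2 /complsS inE => /forall_inP Hb.
apply/subsetP => y; rewrite !inE => /forall_inP Hy.
apply/forall_inP => x Hx; apply: Hy.
by rewrite /compls inE Order.JoinTheory.joinC Order.MeetTheory.meetC; apply: Hb.
Qed.

Theorem proposition2 (disp : Order.disp_t) (L : finTBLatticeType disp) :
  complemented L ->
  (\bot : L) != \top ->
  injective (@compls2 disp L) ->
  forall a : L, compls2 a != [set a] ->
  exists2 b : L, b \in compls2 a & compls2 b = [set b].
Proof.
move=> _ _ inj a.
have [n] := ubnP #|compls2 a|; elim: n a => // n IH a Hn Ha.
have [b Hb Hba] : exists2 b, b \in compls2 a & b != a.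
  case: (pickP [pred b | (b \in compls2 a) && (b != a)]) => [b /andP[H1 H2]|H].
    by exists b.
  exfalso; move: Ha; apply/negP; rewrite negbK; apply/eqP/setP => y; rewrite inE.
  apply/idP/idP => [Hy|/eqP->]; last exact: c2_self.
  by have := H y; rewrite /= Hy /= => /negbFE.
have Hsub := @c2_sub _ _ a b Hb.
have Hprop : compls2 b \proper compls2 a.
  rewrite properEneq Hsub andbT; apply: contra Hba => /eqP E.
  by apply/eqP; apply: inj.
case: (eqVneq (compls2 b) [set b]) => [E|Hb2]; first by exists b.
have [|c Hc Ec] := IH b _ Hb2.
  by have := proper_card Hprop; move: Hn; rewrite ltnS => Hn H; apply: (leq_trans H Hn).
by exists c => //; apply: (subsetP Hsub).
Qed.
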